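(* Let $X$ be an infinite Tychonoff space and let $E$ be a Banach space. If $T:C_p(X)\to E_w$ is a sequentially continuous map (not necessarily linear), then the set $X\setminus B(T)$ is finite, where $B(T)$ is the set of all points $t\in X$ having an open neighbourhood $U$ in $X$ such that $\sup\{\|T(f)\|: f\in C(X),\ \operatorname{supp}(f)\subset U\}<\infty$.
   Context: $C_p(X)$ is the space $C(X)$ of continuous real-valued functions on $X$ with the pointwise convergence topology; $E_w$ is $E$ with its weak topology; $\|\cdot\|$ is the norm of $E$. For $f:X\to\mathbb{R}$, $\operatorname{supp}(f)=\{t\in X: f(t)\neq 0\}$. A map is sequentially continuous if it sends convergent sequences to convergent sequences. *)

(* Defs.v *)
From HB Require Import structures.
From mathcomp Require Import all_boot all_order all_algebra.
From mathcomp Require Import all_classical all_reals all_analysis.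
Set Implicit Arguments. Unset Strict Implicit. Unset Printing Implicit Defensive.
Import Order.TTheory GRing.Theory Num.Theory.
Import numFieldNormedType.Exports.
Local Open Scope classical_set_scope.
Local Open Scope ring_scope.

Definition tychonoff_space (X : topologicalType) (R : realType) : Prop :=
  accessible_space X /\
  forall (a : X) (B : set X), closed B -> ~ B a ->
    exists f : X -> R, continuous f /\ f a = 0 /\ (forall b, B b -> f b = 1).

Definition supp (X : Type) (R : realType) (f : X -> R) : set X :=
  [set t | f t != 0].

(* Convergence of a sequence in C_p(X): pointwise convergence. *)
Definition cp_cvg (X : topologicalType) (R : realType)
    (fn : nat -> X -> R) (f : X -> R) : Prop :=
  forall x : X, fn n x @[n --> \oo] --> f x.

(* Convergence of a sequence in E_w (weak topology sigma(E, dual of E)):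
   convergence after applying every continuous linear functional. *)
Definition weak_cvg (R : realType) (E : normedModType R)
    (un : nat -> E) (u : E) : Prop :=
  forall phi : {linear E -> R^o}, continuous phi ->
    phi (un n) @[n --> \oo] --> phi u.

(* T : C_p(X) -> E_w sequentially continuous. T is given on all of X -> R
   but only its values on continuous functions matter. *)
Definition seq_cont_Cp_Ew (X : topologicalType) (R : realType)
    (E : normedModType R) (T : (X -> R) -> E) : Prop :=
  forall (fn : nat -> X -> R) (f : X -> R),
    (forall n, continuous (fn n)) -> continuous f ->
    cp_cvg fn f -> weak_cvg (fun n => T (fn n)) (T f).

Definition BT (X : topologicalType) (R : realType)
    (E : normedModType R) (T : (X -> R) -> E) : set X :=
  [set t | exists U : set X, [/\ open U, U t &
     exists M : R, forall f : X -> R, continuous f -> supp f `<=` U ->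
       `|T f| <= M]].

(* Main.v *)
Require Import Defs.
From HB Require Import structures.
From mathcomp Require Import all_boot all_order all_algebra.
From mathcomp Require Import all_classical all_reals all_analysis.
From mathcomp Require Import lra.
Import Order.TTheory GRing.Theory Num.Theory.
Import numFieldNormedType.Exports.
Local Open Scope classical_set_scope.
Local Open Scope ring_scope.

Set Implicit Arguments. Unset Strict Implicit. Unset Printing Implicit Defensive.

Section HBsec.
Variables (R : realType) (E : normedModType R) (z : E).

Definition PG (G : set (E * R)) : Prop :=
  [/\ (forall x a y b, G (x,a) -> G (y,b) -> G (x+y, a+b)),
      (forall t x a, G (x,a) -> G (t*:x, t*a)),
      (forall a, G (0,a) -> a = 0),
      (forall x a, G (x,a) -> a <= `|x|) & G (z, `|z|)].

Lemma PG0 G : PG G -> G (0, 0).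
Proof.
case=> _ Hs _ _ Hz; have := Hs 0 _ _ Hz; by rewrite scale0r mul0r.
Qed.

Lemma PG_uniq G x a b : PG G -> G (x,a) -> G (x,b) -> a = b.
Proof.
move=> PGG; case: (PGG) => Ha Hs Hf _ _ Gxa Gxb.
have := Ha _ _ _ _ Gxa (Hs (-1) _ _ Gxb).
rewrite scaleN1r mulN1r subrr => /Hf /eqP; rewrite subr_eq0 => /eqP //.
Qed.

Definition G0 : set (E * R) := [set p | exists t : R, p = (t *: z, t * `|z|)].

Lemma PG_G0 : PG G0.
Proof.
split.
- move=> x a y b [s [-> ->]] [t [-> ->]]; exists (s + t).
  by rewrite scalerDl mulrDl.
- move=> t x a [s [-> ->]]; exists (t * s); by rewrite scalerA mulrA.
- move=> a [s [H ->]].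
  have [->|z0] := eqVneq z 0; first by rewrite normr0 mulr0.
  move/esym/eqP: H; rewrite scaler_eq0 (negbTE z0) orbF => /eqP ->.
  by rewrite mul0r.
- move=> x a [s [-> ->]]; rewrite normrZ ler_wpM2r //; exact: ler_norm.
- by exists 1; rewrite scale1r mul1r.
Qed.

Lemma PG_chain (F : set (set (E * R))) : F `<=` PG -> total_on F subset ->
  F !=set0 -> PG (\bigcup_(G in F) G).
Proof.
move=> FP tot [G1 FG1].
have up (G G' : set (E * R)) p q : F G -> F G' -> G p -> G' q ->
    exists2 H, F H & H p /\ H q.
  move=> FG FG' Gp G'q; have [GG'|G'G] := tot _ _ FG FG'.
  - by exists G' => //; split => //; exact: GG'.
  - by exists G => //; split => //; exact: G'G.
split.
- move=> x a y b [G FG Gxa] [G' FG' Gyb].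
  have [H FH [Hxa Hyb]] := up _ _ _ _ FG FG' Gxa Gyb.
  by exists H => //; case: (FP _ FH) => Ha _ _ _ _; exact: Ha.
- move=> t x a [G FG Gxa]; exists G => //.
  by case: (FP _ FG) => _ Hs _ _ _; exact: Hs.
- move=> a [G FG G0a]; by case: (FP _ FG) => _ _ Hf _ _; exact: Hf.
- move=> x a [G FG Gxa]; by case: (FP _ FG) => _ _ _ Hd _; exact: Hd.
- exists G1 => //; by case: (FP _ FG1).
Qed.

Lemma PG_extend G x : PG G -> ~ (exists a, G (x, a)) ->
  exists G', [/\ PG G', G `<=` G' & exists a, G' (x, a)].
Proof.
move=> PGG nx; have G00 := PG0 PGG.
case: (PGG) => Ha Hs Hf Hd Hz.
pose S := [set r | exists v b, G (v, b) /\ r = b - `|v - x|].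
have Sub w g : G (w, g) -> ubound S (`|w + x| - g).
  move=> Gwg r [v [b [Gvb ->]]].
  rewrite lerBrDr addrAC lerBlDr.
  apply: (le_trans (Hd _ _ (Ha _ _ _ _ Gvb Gwg))).
  have -> : v + w = (v - x) + (w + x) by rewrite addrACA addNr addr0.
  by rewrite addrC; exact: ler_normD.
have hsS : has_sup S.
  split; first by exists (0 - `|0 - x|); exists 0, 0.
  by exists (`|0 + x| - 0); exact: Sub.
pose c := sup S.
have cle w g : G (w, g) -> c <= `|w + x| - g.
  move=> Gwg; apply: ge_sup; first by case: hsS.
  exact: Sub.
have cge v b : G (v, b) -> b - `|v - x| <= c.
  move=> Gvb; apply: sup_upper_bound => //; by exists v, b.
pose G' := [set p | exists u b t, G (u, b) /\ p = (u + t *: x, b + t * c)].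
exists G'; split.
- split.
  + move=> x1 a1 y1 b1 [u1 [c1 [t1 [G1 [-> ->]]]]] [u2 [c2 [t2 [G2 [-> ->]]]]].
    exists (u1 + u2), (c1 + c2), (t1 + t2); split; first exact: Ha.
    by rewrite scalerDl mulrDl; congr (_, _); rewrite addrACA.
  + move=> s x1 a1 [u1 [c1 [t1 [G1 [-> ->]]]]].
    exists (s *: u1), (s * c1), (s * t1); split; first exact: Hs.
    by rewrite scalerDr mulrDr scalerA mulrA.
  + move=> a [u [b [t [Gub [e ->]]]]].
    have [t0|tn0] := eqVneq t 0.
      move: e; rewrite t0 scale0r addr0 => e; rewrite -e in Gub.
      by rewrite (Hf _ Gub) mul0r addr0.
    exfalso; apply: nx; exists (- t^-1 * b).
    have -> : x = (- t^-1) *: u.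
      apply: (scalerI tn0); rewrite scalerA mulrN divff // scaleN1r.
      by apply/eqP; rewrite -addr_eq0 addrC; apply/eqP.
    exact: Hs.
  + move=> y a [u [b [t [Gub [-> ->]]]]].
    have [t0|tp|tn] := ltgtP t 0.
    *
      pose s := - t; have sp : 0 < s by rewrite oppr_gt0.
      have eqN : `|s^-1 *: u - x| = s^-1 * `|u + t *: x|.
        have -> : u + t *: x = s *: (s^-1 *: u - x).
          by rewrite scalerBr scalerA divff ?gt_eqF // scale1r /s scaleNr opprK.
        by rewrite normrZ gtr0_norm // mulrA mulVf ?gt_eqF // mul1r.
      have := cge _ _ (Hs s^-1 _ _ Gub); rewrite eqN -mulrBr => h.
      have := ler_wpM2l (ltW sp) h.
      rewrite mulrA divff ?gt_eqF // mul1r /s mulNr; lra.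
    * have eqN : `|t^-1 *: u + x| = t^-1 * `|u + t *: x|.
        have -> : u + t *: x = t *: (t^-1 *: u + x).
          by rewrite scalerDr scalerA divff ?gt_eqF // scale1r.
        by rewrite normrZ gtr0_norm // mulrA mulVf ?gt_eqF // mul1r.
      have := cle _ _ (Hs t^-1 _ _ Gub); rewrite eqN -mulrBr => h.
      have := ler_wpM2l (ltW tp) h.
      rewrite mulrA divff ?gt_eqF // mul1r; lra.
    * by rewrite tn scale0r mul0r !addr0; exact: Hd.
  + exists z, `|z|, 0; split => //.
    by rewrite scale0r mul0r !addr0.
- move=> [u b] Gub; exists u, b, 0; split => //.
  by rewrite scale0r mul0r !addr0.
- exists (0 + 1 * c); exists 0, 0, 1; split => //.
  by rewrite scale1r !add0r.
Qed.

Lemma hahn_banach_norm : exists psi : E -> R,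
  [/\ forall a x y, psi (a *: x + y) = a * psi x + psi y,
      forall x, `|psi x| <= `|x| & psi z = `|z|].
Proof.
pose T := {G : set (E * R) | PG G}.
pose Rl (s t : T) := `[< sval s `<=` sval t >].
have [M Mmax] : exists t : T, forall s, Rl t s -> s = t.
  apply: Zorn.
  - by move=> t; apply/asboolP.
  - by move=> r s t /asboolP rs /asboolP st; apply/asboolP => p /rs /st.
  - move=> [s Ps] [t Pt] /asboolP /= st /asboolP /= ts.
    exact/eq_exist/seteqP.
  - move=> A totA.
    have [->|/set0P[a0 Aa0]] := eqVneq A set0.
      by exists (exist _ _ PG_G0); move=> s [].
    pose F := [set sval s | s in A].
    have FP : F `<=` PG by move=> _ [s _ <-]; exact: (svalP s).
    have totF : total_on F subset.
      move=> _ _ [s As <-] [t At <-].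
      by have [/asboolP|/asboolP] := totA _ _ As At; [left|right].
    have Fn0 : F !=set0 by exists (sval a0), a0.
    exists (exist _ _ (PG_chain FP totF Fn0)); move=> s As; apply/asboolP => p sp /=.
    by exists (sval s) => //; exists s.
  - idtac.
case: M Mmax => G PGG Mmax.
have tot x : exists a, G (x, a).
  apply: contrapT => nx.
  have [G' [PG' GG' [a G'xa]]] := PG_extend PGG nx.
  have := Mmax (exist _ _ PG') (asboolT GG').
  move=> [eG]; apply: nx; exists a; by rewrite -eG.
pose psi x := projT1 (cid (tot x)).
have Gpsi x : G (x, psi x) by rewrite /psi; case: cid.
case: (PGG) => Ha Hs Hf Hd Hz.
exists psi; split.
- move=> a x y; apply: (PG_uniq PGG (Gpsi _)).
  exact: Ha (Hs _ _ _ (Gpsi x)) (Gpsi y).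
- move=> x; rewrite ler_norml Hd ?andbT //.
  rewrite lerNl -normrN; apply: Hd.
  have := Hs (-1) _ _ (Gpsi x); rewrite scaleN1r mulN1r => h.
  by [].
- exact: (PG_uniq PGG (Gpsi z) Hz).
Qed.

End HBsec.

Lemma pack_functional (R : realType) (E : normedModType R) (f : E -> R) (C : R) :
  (forall a x y, f (a *: x + y) = a * f x + f y) ->
  (forall x, `|f x| <= C * `|x|) ->
  exists phi : {linear E -> R^o}, (forall x, phi x = f x) /\ continuous phi.
Proof.
move=> lf bf.
have lf' : linear (f : E -> R^o) by move=> a x y; exact: lf.
pose phi : {linear E -> R^o} := HB.pack (f : E -> R^o) (GRing.isLinear.Build _ _ _ _ _ lf').
exists phi; split => //.
apply/bounded_linear_continuous/linear_boundedP.
near=> r => x.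
apply: (le_trans (bf x)); apply: ler_wpM2r; first by [].
by near: r; apply: nbhs_pinfty_ge; rewrite num_real.
Unshelve. all: by end_near. Qed.

Section GH.
Variables (R : realType) (E : normedModType R) (A : nat -> set E).
Hypothesis A1 : forall n (M : R), exists v, A n v /\ M <= `|v|.
Hypothesis A2 : forall (m : nat -> nat) (v : nat -> E), injective m ->
  (forall k, A (m k) (v k)) ->
  forall phi : {linear E -> R^o}, continuous phi -> phi (v k) @[k --> \oo] --> 0.

Definition linS (S : E -> R) := forall a x y, S (a *: x + y) = a * S x + S y.

Definition wt (k : nat) : R := ((4:R) ^+ k)^-1.
Definition Bd (k : nat) : R := 3 * (4:R) ^+ k.

Lemma wt_gt0 k : 0 < wt k.
Proof. by rewrite /wt invr_gt0 exprn_gt0. Qed.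

Lemma wtS k : wt k.+1 = wt k / 4.
Proof. by rewrite /wt exprSr invfM. Qed.

Lemma wtBd k : wt k * Bd k = 3.
Proof. by rewrite /wt /Bd mulrCA mulVf ?mulr1 // expf_neq0. Qed.

Definition stepQ k m (S : E -> R) (o : nat * E * (E -> R)) :=
  [/\ (m < o.1.1)%N, A o.1.1 o.1.2, `|S o.1.2| <= 1 & Bd k <= `|o.1.2|] /\
  [/\ linS o.2, (forall x, `|o.2 x| <= `|x|) & o.2 o.1.2 = `|o.1.2|].

Lemma step k m (S : E -> R) : linS S -> (forall x, `|S x| <= 2 * `|x|) ->
  exists o : nat * E * (E -> R),
  [/\ (m < o.1.1)%N, A o.1.1 o.1.2, `|S o.1.2| <= 1 & Bd k <= `|o.1.2|] /\
  [/\ linS o.2, (forall x, `|o.2 x| <= `|x|) & o.2 o.1.2 = `|o.1.2|].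
Proof.
move=> lS bS.
have [phi [phiE cphi]] := pack_functional lS bS.
have [h hP] := choice (fun n => A1 n (Bd k)).
have := A2 (m := id) (v := h) (fun a b e => e) (fun n => (hP n).1) cphi.
move=> /cvgr0_norm_lt /(_ 1 ltr01) [N _ HN].
pose n := maxn N m.+1.
have [psi [lpsi bpsi psiv]] := hahn_banach_norm (h n).
exists (n, h n, psi); split; split => //=.
- by rewrite leq_max leqnn orbT.
- exact: (hP n).1.
- by rewrite -phiE ltW // HN //= leq_max leqnn.
- exact: (hP n).2.
Qed.

Fixpoint st (f : nat -> nat -> (E -> R) -> nat * E * (E -> R)) k
  : nat * (E -> R) :=
  match k with
  | 0 => (0%N, fun _ => 0)
  | k'.+1 => let o := f k' (st f k').1 (st f k').2 in
             (o.1.1, fun x => (st f k').2 x + wt k' * o.2 x)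
  end.

Lemma gliding : False.
Proof.
have fex : forall kmS : nat * nat * (E -> R),
  exists o : nat * E * (E -> R),
    (linS kmS.2 /\ forall x, `|kmS.2 x| <= 2 * `|x|) -> stepQ kmS.1.1 kmS.1.2 kmS.2 o.
  move=> [[k m] S] /=.
  case: (pselect (linS S /\ forall x, `|S x| <= 2 * `|x|)) => [[lS bS]|nP].
    have [ob obP] := step k m lS bS; by exists ob.
  by exists (0%N, 0, fun _ => 0) => /nP.
have [f fP] := choice fex.
pose g k m S := f (k, m, S).
pose M k := (st g k).1.
pose S k := (st g k).2.
pose ob k := g k (M k) (S k).
have SS k x : S k.+1 x = S k x + wt k * (ob k).2 x by [].
have MS k : M k.+1 = (ob k).1.1 by [].
have inv k : linS (S k) /\ forall x, `|S k x| <= 4/3 * (1 - wt k) * `|x|.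
  elim: k => [|k [lS bS]].
    split; first by move=> a x y; rewrite /S /= mulr0 addr0.
    by move=> x; rewrite /S /= normr0 /wt expr0 invr1 subrr mulr0 mul0r.
  have := fP (k, M k, S k); rewrite /= -/(g _ _ _) -/(ob k) => oP.
  have [_ [lp bp _]] : stepQ k (M k) (S k) (ob k).
    apply: oP; split => // x; apply: (le_trans (bS x)); apply: ler_wpM2r => //.
    have := wt_gt0 k; lra.
  split.
    move=> a x y; rewrite !SS lS lp; lra.
  move=> x; rewrite SS wtS.
  apply: (le_trans (ler_normD _ _)); rewrite normrM gtr0_norm ?wt_gt0 //.
  have := ler_wpM2l (ltW (wt_gt0 k)) (bp x); have := bS x.
  have := normr_ge0 x; have := wt_gt0 k; nra.
have Q k : stepQ k (M k) (S k) (ob k).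
  have [lS bS] := inv k.
  apply: (fP (k, M k, S k)); split => // x; apply: (le_trans (bS x)).
  apply: ler_wpM2r => //; have := wt_gt0 k; lra.
have tail k d x : `|S (k + d)%N x - S k x| <= 4/3 * (wt k - wt (k + d)%N) * `|x|.
  elim: d => [|d IH]; first by rewrite addn0 !subrr normr0 mulr0 mul0r.
  have [_ [_ bp _]] := Q (k + d)%N.
  rewrite addnS SS wtS.
  have -> : S (k + d)%N x + wt (k + d)%N * (ob (k + d)%N).2 x - S k x =
     (S (k + d)%N x - S k x) + wt (k + d)%N * (ob (k + d)%N).2 x by lra.
  apply: (le_trans (ler_normD _ _)); rewrite normrM gtr0_norm ?wt_gt0 //.
  have := ler_wpM2l (ltW (wt_gt0 (k + d)%N)) (bp x).
  have := normr_ge0 x; have := wt_gt0 (k + d)%N; nra.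
have wt0 : wt k @[k --> \oo] --> 0.
  have -> : wt = fun k => (4^-1 : R) ^+ k by apply/funext => k; rewrite /wt exprVn.
  apply: cvg_expr; rewrite ger0_norm ?invr_ge0 // invf_lt1 //; lra.
have cvgS x : cvg (S n x @[n --> \oo]).
  apply: cauchy_cvg; apply: cauchy_exP => e e0.
  pose e' := e / (2 * (`|x| + 1)).
  have xp : 0 < `|x| + 1 by have := normr_ge0 x; lra.
  have e'0 : 0 < e' by rewrite /e' divr_gt0 // mulr_gt0.
  have e'E : e' * (`|x| + 1) = e / 2.
    by rewrite /e' invfM mulrA -mulrA mulVf ?gt_eqF // mulr1.
  have := wt0; move=> /cvgr0_norm_lt /(_ _ e'0) [N _ HN].
  exists (S N x); exists N => // n /= Nn.
  rewrite -ball_normE /ball_ /= distrC -(subnKC Nn).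
  apply: (le_lt_trans (tail _ _ _)).
  have h1 := HN N (leqnn N); rewrite ger0_norm ?(ltW (wt_gt0 N)) // in h1.
  have h2 := wt_gt0 (N + (n - N))%N.
  have h3 : wt N * `|x| <= e' * `|x| by apply: ler_wpM2r => //; exact: ltW.
  have := normr_ge0 x; nra.
pose phi x := lim (S n x @[n --> \oo]).
have lphi : linS phi.
  move=> a x y; rewrite /phi.
  have -> : (fun n => S n (a *: x + y)) = (fun n => a * S n x + S n y).
    by apply/funext => n; have [lS _] := inv n; rewrite lS.
  apply: cvg_lim => //; apply: cvgD; last exact: cvgS.
  exact: cvgMl_tmp (cvgS x).
have bphi x : `|phi x| <= 4/3 * `|x|.
  have bd n : `|S n x| <= 4/3 * `|x|.
    have [_ bS] := inv n; apply: (le_trans (bS x)); apply: ler_wpM2r => //.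
    have := wt_gt0 n; lra.
  rewrite ler_norml; apply/andP; split.
    apply: limr_ge; first exact: cvgS.
    by apply: nearW => n; have := bd n; rewrite ler_norml => /andP[].
  apply: limr_le; first exact: cvgS.
  by apply: nearW => n; have := bd n; rewrite ler_norml => /andP[].
have [Phi [PhiE cPhi]] := pack_functional lphi bphi.
pose m k := M k.+1.
pose v k := (ob k).1.2.
have minc : {homo m : i j / (i < j)%N >-> (i < j)%N}.
  apply: homo_ltn; first by move=> y x z; exact: ltn_trans.
  move=> i; have [[+ _ _ _] _] := Q i.+1; by rewrite /m MS.
have minj : injective m.
  move=> i j eij; have [/minc|/minc|//] := ltngtP i j; by rewrite eij ltnn.
have Av k : A (m k) (v k).
  have [[_ + _ _] _] := Q k; by rewrite /m MS.
have := A2 minj Av cPhi; move=> /cvgr0_norm_lt /(_ 1 ltr01) [N _ HN].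
have := HN N (leqnn N); rewrite PhiE ltNge => /negP; apply.
have [[_ _ Sv Bv] [_ _ psiv]] := Q N.
have low : S N.+1 (v N) - 4/3 * wt N.+1 * `|v N| <= phi (v N).
  apply: limr_ge; first exact: cvgS.
  exists N.+1 => // n /= Nn.
  have := tail N.+1 (n - N.+1)%N (v N); rewrite subnKC //.
  have := wt_gt0 n; have := normr_ge0 (v N).
  move: (S n (v N)) (S N.+1 (v N)) => a b; rewrite ler_norml => ? ? /andP[? ?].
  nra.
rewrite SS -/(v N) psiv wtS in low.
have h3 : 3 <= wt N * `|v N|.
  by rewrite -(wtBd N); apply: ler_wpM2l => //; exact: ltW (wt_gt0 N).
move: Sv; rewrite ler_norml => /andP[Sv1 _].
apply: (le_trans _ (ler_norm _)); lra.
Qed.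

End GH.

Lemma two_points (X : Type) (S : set X) : infinite_set S ->
  exists a b, [/\ S a, S b & a <> b].
Proof.
move=> iS.
have [a Sa] : S !=set0.
  apply/set0P/negP => /eqP S0; apply: iS; rewrite S0; exact: finite_set0.
have [b [Sb ba]] : exists b, S b /\ b <> a.
  apply: contrapT => nb; apply: iS; apply: (sub_finite_set _ (finite_set1 a)).
  move=> b Sb; apply: contrapT => ba; apply: nb; by exists b.
by exists a, b; split => // ab; apply: ba.
Qed.

Lemma sep_step (R : realType) (X : topologicalType) (Bad W : set X) :
  tychonoff_space X R -> open W -> infinite_set (Bad `&` W) ->
  exists t U W', [/\ Bad t /\ U t, open U /\ U `<=` W, open W' /\ W' `<=` W,
    (forall x, U x -> W' x -> False) & infinite_set (Bad `&` W')].
Proof.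
move=> [acc creg] oW iBW.
have [a [b [[Ba Wa] [Bb Wb] ab]]] := two_points iBW.
have [f [cf [fa fb]]] : exists f : X -> R, continuous f /\ f a = 0 /\ f b = 1.
  have [f [cf [fa fb]]] := creg a [set b] (@accessible_closed_set1 _ acc b) ab.
  by exists f; split => //; split => //; exact: fb.
have opre (P : set R) : open P -> open (W `&` f @^-1` P).
  by move=> oP; apply: openI => //; exact: (proj1 (continuousP f) cf).
pose P := W `&` f @^-1` [set r | r < 1/3].
pose P' := W `&` f @^-1` [set r | 1/3 < r].
pose Q := W `&` f @^-1` [set r | 2/3 < r].
pose Q' := W `&` f @^-1` [set r | r < 2/3].
have [iP|iQ] : infinite_set (Bad `&` P') \/ infinite_set (Bad `&` Q').
  apply: contrapT => /not_orP [/contrapT fP /contrapT fQ]; apply: iBW.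
  have fU : finite_set ((Bad `&` P') `|` (Bad `&` Q')) by rewrite finite_setU.
  apply: (sub_finite_set _ fU).
  move=> x [Bx Wx]; have [h|h] : 1/3 < f x \/ f x < 2/3.
    case: (ltP (1/3) (f x)) => h; [by left | right; lra].
  - by left.
  - by right.
- exists a, P, P'; split.
  + split => //; split => //=; rewrite fa; lra.
  + split; [apply: opre; exact: open_lt | by move=> x []].
  + split; [apply: opre; exact: open_gt | by move=> x []].
  + move=> x [_ h1] [_ h2]; move: h1 h2; rewrite /preimage /=; lra.
  + exact: iP.
- exists b, Q, Q'; split.
  + split => //; split => //=; rewrite fb; lra.
  + split; [apply: opre; exact: open_gt | by move=> x []].
  + split; [apply: opre; exact: open_lt | by move=> x []].
  + move=> x [_ h1] [_ h2]; move: h1 h2; rewrite /preimage /=; lra.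
  + exact: iQ.
Qed.

Lemma disjoint_seq (R : realType) (X : topologicalType) (Bad : set X) :
  tychonoff_space X R -> infinite_set Bad ->
  exists (t : nat -> X) (U : nat -> set X),
    [/\ forall n, Bad (t n), forall n, open (U n) /\ U n (t n) &
        forall n m x, U n x -> U m x -> n = m].
Proof.
move=> ty iB; have [x0 _] := two_points iB.
have rex : forall W : set X, exists r : X * set X * set X,
    open W /\ infinite_set (Bad `&` W) ->
    [/\ Bad r.1.1 /\ r.1.2 r.1.1, open r.1.2 /\ r.1.2 `<=` W,
      open r.2 /\ r.2 `<=` W,
      (forall x, r.1.2 x -> r.2 x -> False) & infinite_set (Bad `&` r.2)].
  move=> W; case: (pselect (open W /\ infinite_set (Bad `&` W))) => [[oW iW]|nP].
    have [t [U [W' H]]] := sep_step ty oW iW.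
    by exists (t, U, W').
  by exists (x0, set0, set0) => /nP.
have [r rP] := choice rex.
pose Ws := fix Ws (n : nat) : set X := if n is n'.+1 then (r (Ws n')).2 else setT.
have inv n : open (Ws n) /\ infinite_set (Bad `&` Ws n).
  elim: n => [|n [oW iW]] /=; first by split; [exact: openT | rewrite setIT].
  by have [_ _ [] ? _ _ ?] := rP _ (conj oW iW).
have P n := rP _ (inv n).
have dec n d : Ws (n + d)%N `<=` Ws n.
  elim: d => [|d IH]; first by rewrite addn0.
  rewrite addnS /=; have [_ _ [_ +] _ _] := P (n + d)%N; move=> h x /h; exact: IH.
exists (fun n => (r (Ws n)).1.1), (fun n => (r (Ws n)).1.2); split.
- by move=> n; have [[]] := P n.
- by move=> n; have [[? ?] [? _] _ _ _] := P n.
- have key n m x : (n < m)%N -> (r (Ws n)).1.2 x -> (r (Ws m)).1.2 x -> False.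
    move=> nm Un Um.
    have [_ [_ sU] _ _ _] := P m.
    have := dec n.+1 (m - n.+1)%N; rewrite subnKC // => sW.
    have [_ _ _ dj _] := P n.
    by apply: (dj x Un); apply: sW; apply: sU.
  move=> n m x Un Um; have [nm|mn|//] := ltngtP n m.
  + by case: (key _ _ _ nm Un Um).
  + by case: (key _ _ _ mn Um Un).
Qed.

Unset Implicit Arguments. Set Strict Implicit. Set Printing Implicit Defensive.

Theorem lemma3p3 (R : realType) (X : topologicalType)
  (E : completeNormedModType R) (T : (X -> R) -> E) :
  tychonoff_space X R -> infinite_set [set: X] ->
  seq_cont_Cp_Ew T ->
  finite_set (~` BT T).
Proof.
move=> ty _ HT; apply: contrapT => iB.
have [t [U [Bt oU Ud]]] := disjoint_seq ty iB.
pose z := T (fun _ : X => 0 : R).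
pose A n (v : E) := exists g : X -> R,
  [/\ continuous g, supp g `<=` U n & v = T g - z].
apply: (@gliding R E A).
- move=> n M; apply: contrapT => nex; apply: (Bt n).
  exists (U n); split; [exact: (oU n).1 | exact: (oU n).2 |].
  exists (M + `|z|) => g cg sg.
  rewrite leNgt; apply/negP => lt; apply: nex; exists (T g - z); split.
    by exists g.
  have := ler_distD z (T g) 0; rewrite !subr0.
  move: lt; lra.
- move=> m v minj Av phi cphi.
  have [g gP] := choice Av.
  have cp : cp_cvg g (fun _ => 0).
    move=> x; case: (pselect (exists k0, g k0 x != 0)) => [[k0 gk0]|ng].
      apply: cvg_near_cst; exists k0.+1 => // k /= hk.
      apply/eqP; apply: contraT => gk.
      have [_ s0 _] := gP k0; have [_ s _] := gP k.
      have /minj ek := Ud _ _ x (s _ gk) (s0 _ gk0).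
      by move: hk; rewrite ek ltnn.
    apply: cvg_near_cst; apply: nearW => k; apply/eqP; apply: contraT => gk.
    by case: ng; exists k.
  have w := HT g (fun _ => 0) (fun k => let: And3 c _ _ := gP k in c)
    (@cst_continuous X R 0) cp phi cphi.
  have -> : (fun k => phi (v k)) = (fun k => phi (T (g k)) - phi z).
    by apply/funext => k; have [_ _ ->] := gP k; rewrite linearB.
  rewrite -(subrr (phi z)); apply: cvgB => //; exact: cvg_cst.
Qed.
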